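(* Let $\mathcal{H}$ be an instance of $r$-Hypergraph Label Cover ($r\geq 2$), let $\mathcal{S}$ be an $(r,|C|,2)$-vector system, and let $G$ be the graph with vector costs obtained from $\mathcal{H}$ and $\mathcal{S}$ by the basic reduction (with $p=2$). (a) If some assignment satisfies all hyperedges of $\mathcal{H}$, then $G$ has an $s$-$t$ path $P$ with $\|\mathrm{cost}(P)\|_2^2=1$. (b) If every assignment weakly satisfies at most an $\varepsilon$-fraction of the hyperedges, then every $s$-$t$ path $P$ in $G$ satisfies $\|\mathrm{cost}(P)\|_2^2\geq 2-(1/r+2\varepsilon)$. (Norms are the scaled norms defined below.)
   Context: $r$-Hypergraph Label Cover: an $r$-partite hypergraph $\mathcal{H}=(V,\mathcal{E})$, $V=V_1\cup\dots\cup V_r$, each hyperedge containing exactly one vertex of each $V_j$; label set $L$; color set $C$; maps $\pi_h^u:L\to C$ for $h\in\mathcal{E}$, $u\in h$. For an assignment $\sigma:V\to L$, the color of $u$ in $h$ is $\pi_h^u(\sigma(u))$; $\sigma$ satisfies $h$ if all vertices of $h$ have the same color in $h$, and weakly satisfies $h$ if two distinct vertices of $h$ have the same color in $h$. Multilinear product: $\langle u_1,\dots,u_p\rangle=\sum_j\prod_i u_i(j)$. An $(r,q,p)$-vector system is a collection $\{v_j^c: j\in[r], c\in[q]\}$ of $rq$ distinct vectors in $\mathbb{R}^{d_0}$ (color of $v_j^c$ is $c$) such that for any $u_1,\dots,u_p$ from it (repetitions allowed), $\langle u_1,\dots,u_p\rangle=0$ if two distinct vectors in the list share a color, and otherwise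 $\langle u_1,\dots,u_p\rangle=r^{-t}$ with $t$ the number of distinct vectors in the list. Here colors are identified with $C$. Basic reduction: let $m=|\mathcal{E}|$ and $\mathcal{S}=\{v_j^c\}$ an $(r,|C|,p)$-vector system in $\mathbb{R}^{d_0}$. For each $u\in V$ create a block of $|L|$ parallel edges $e(u,l)$, $l\in L$, and compose all blocks in series (in arbitrary order) between $s$ and $t$; $s$-$t$ paths correspond bijectively to assignments via $P_\sigma=\{e(u,\sigma(u)):u\in V\}$. Costs lie in $\mathbb{R}^{d_0m}=\bigoplus_{h\in\mathcal{E}}\mathbb{R}^{d_0}$: $c(e(u,l))=\bigoplus_h c^h(e(u,l))$ with $c^h(e(u,l))=v_j^{\pi_h^u(l)}$ if $u\in h$ and $u\in V_j$, and $c^h(e(u,l))=0$ if $u\notin h$. $\mathrm{cost}(P)=\sum_{e\in P}c(e)$. On $\mathbb{R}^{d_0m}$ we use the scaled norm $\|x\|_p^p=\frac{1}{m}\sum_i|x_i|^p$. *)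

(* Defs.v *)
From HB Require Import structures.
From mathcomp Require Import all_boot all_order all_algebra.
From mathcomp Require Import reals.
Set Implicit Arguments. Unset Strict Implicit. Unset Printing Implicit Defensive.
Import Order.TTheory GRing.Theory Num.Theory.
Local Open Scope ring_scope.

(* Vertices V are partitioned into
   V_0,...,V_{r-1} by [lc_part]; each hyperedge h (elements of the finite type
   lc_E) contains exactly one vertex of each part, namely [lc_edge h j] in V_j.
   The projection pi_h^u for u = lc_edge h j is [lc_pi h j]. *)
Record HLC (r : nat) := {
  lc_V : finType;
  lc_L : finType;
  lc_C : finType;
  lc_E : finType;
  lc_part : lc_V -> 'I_r;
  lc_edge : lc_E -> 'I_r -> lc_V;
  lc_edge_part : forall h j, lc_part (lc_edge h j) = j;
  lc_pi : lc_E -> 'I_r -> lc_L -> lc_C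
}.

Section LC.
Variables (r : nat) (H : HLC r).

Definition assignment := lc_V H -> lc_L H.

Definition color (s : assignment) (h : lc_E H) (j : 'I_r) : lc_C H :=
  lc_pi h j (s (lc_edge h j)).

Definition satisfies (s : assignment) (h : lc_E H) : bool :=
  [forall j, forall j', color s h j == color s h j'].

(* two distinct vertices of h (= two distinct positions, as they lie in
   different parts) have the same color *)
Definition weakly_satisfies (s : assignment) (h : lc_E H) : bool :=
  [exists j, exists j', (j != j') && (color s h j == color s h j')].
End LC.

Section VS.
Variable R : realType.

Definition mlprod (d p : nat) (u : 'I_p -> {ffun 'I_d -> R}) : R :=
  \sum_(j < d) \prod_(i < p) u i j.

Definition vector_system (r : nat) (C : finType) (d0 p : nat)
    (v : 'I_r -> C -> {ffun 'I_d0 -> R}) : Prop :=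
  injective (fun x : 'I_r * C => v x.1 x.2) /\
  forall s : 'I_p -> 'I_r * C,
    let u := fun i => v (s i).1 (s i).2 in
    mlprod u =
      if [exists i, exists i', (u i != u i') && ((s i).2 == (s i').2)]
      then 0
      else (r%:R : R) ^- (size (undup [seq u i | i <- enum 'I_p])).

Variables (r : nat) (H : HLC r) (d0 : nat)
          (v : 'I_r -> lc_C H -> {ffun 'I_d0 -> R}).

(* Edges of G: e(u,l) is the pair (u,l).  G is the series composition of the
   parallel blocks {e(u,l) : l in L}, u in V; hence an s-t path is exactly an
   edge set containing exactly one edge of every block. *)
Definition is_st_path (P : {set lc_V H * lc_L H}) : Prop :=
  forall u : lc_V H, #|[set l | (u, l) \in P]| = 1%N.

(* cost vector in R^{d0 m} = (+)_h R^{d0}, represented as E -> 'I_d0 -> R *)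
Definition edge_cost (e : lc_V H * lc_L H) (h : lc_E H) (i : 'I_d0) : R :=
  let u := e.1 in
  if lc_edge h (lc_part u) == u
  then v (lc_part u) (lc_pi h (lc_part u) e.2) i
  else 0.

Definition path_cost (P : {set lc_V H * lc_L H}) (h : lc_E H) (i : 'I_d0) : R :=
  \sum_(e in P) edge_cost e h i.

Definition scaled_normp_pow (p : nat) (x : lc_E H -> 'I_d0 -> R) : R :=
  (#|lc_E H|%:R)^-1 * \sum_(h : lc_E H) \sum_(i < d0) `|x h i| ^+ p.
End VS.

(* Main.v *)
Require Import Defs.
From HB Require Import structures.
From mathcomp Require Import all_boot all_order all_algebra.
From mathcomp Require Import reals ring lra.
Set Implicit Arguments. Unset Strict Implicit. Unset Printing Implicit Defensive.
Import Order.TTheory GRing.Theory Num.Theory.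
Local Open Scope ring_scope.

Lemma ip_val (R : realType) (r : nat) (C : finType) (d0 : nat)
   (v : 'I_r -> C -> {ffun 'I_d0 -> R}) :
  @vector_system R r C d0 2 v -> forall (j k : 'I_r) (c : 'I_r -> C),
  \sum_(x < d0) v j (c j) x * v k (c k) x =
   (j == k)%:R / r%:R + ((j != k) && (c j != c k))%:R / r%:R ^+ 2.
Proof.
move=> [Hinj Hv] j k c.
pose s := fun i : 'I_2 => if i == ord0 then (j, c j) else (k, c k).
have := Hv s; rewrite /mlprod.
under eq_bigr => x _ do rewrite !big_ord_recl big_ord0 mulr1.
rewrite /= enum_ordSl enum_ordSl enum_ord0 /=.
rewrite /s /=.
have hne : (v j (c j) == v k (c k)) = (j == k).
  apply/eqP/eqP => [h|->//]; by have := Hinj (j, c j) (k, c k) h => -[].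
move=> ->.
case: ifPn => [/existsP [i /existsP [i' /andP [h1 h2]]] | hn].
  move: h1 h2; rewrite /s; case: (i == ord0); case: (i' == ord0) => /=;
    rewrite ?eqxx // => h1 h2;
  (have njk : j != k by apply: contraNneq h1 => ejk; subst k; rewrite eqxx);
  (have hc : c j = c k by (apply/eqP; done) || (apply/esym/eqP; done));
  by rewrite (negbTE njk) hc eqxx /= !mul0r addr0.
rewrite inE hne.
case: eqP => [ejk|njk] /=.
  by rewrite mul1r mul0r addr0 expr1.
have hc : c j != c k.
  apply: contra hn => hc; apply/existsP; exists ord0; apply/existsP; exists (lift ord0 ord0).
  by rewrite /s /= hne hc andbT; apply/eqP.
rewrite hc /= mul0r add0r mul1r.
done.
Qed.
Lemma path_cost_sigma (R : realType) (r : nat) (H : HLC r) (d0 : nat)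
    (v : 'I_r -> lc_C H -> {ffun 'I_d0 -> R}) (P : {set lc_V H * lc_L H})
    (sg : assignment H) :
  (forall u l, ((u, l) \in P) = (l == sg u)) ->
  forall h i, path_cost v P h i = \sum_(j < r) v j (color sg h j) i.
Proof.
move=> HP h i; rewrite /path_cost.
rewrite (eq_bigl (fun e => xpredT e.1 && (e.2 == sg e.1))); last first.
  by case=> u l; rewrite HP.
rewrite -(pair_big_dep xpredT (fun u l => l == sg u) (fun u l => edge_cost v (u, l) h i)) /=.
under eq_bigr => u _ do rewrite big_pred1_eq.
rewrite /edge_cost /=.
pose G u := v (lc_part u) (lc_pi h (lc_part u) (sg u)) i.
have step : forall u, (if lc_edge h (lc_part u) == u then G u else 0)
            = \sum_(j < r | lc_edge h j == u) G u.
  move=> u; case: eqP => [e|ne].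
    rewrite (bigD1 (lc_part u)) /=; last by apply/eqP.
    rewrite big1 ?addr0 // => j /andP [/eqP e1 ne2].
    by case/eqP: ne2; rewrite -e1 lc_edge_part.
  rewrite big1 // => j /eqP e2; case: ne; by rewrite -e2 lc_edge_part.
rewrite (eq_bigr _ (fun u _ => step u)) /=.
rewrite (exchange_big_dep xpredT) //=; apply: eq_bigr => j _.
rewrite (big_pred1 (lc_edge h j)); last by move=> u; rewrite /= eq_sym.
by rewrite /G lc_edge_part.
Qed.
Definition Nval (R : realType) (r : nat) (T : eqType) (c : 'I_r -> T) : R :=
  \sum_(j < r) \sum_(k < r)
    ((j == k)%:R / r%:R + ((j != k) && (c j != c k))%:R / r%:R ^+ 2).

Lemma sum_diag (R : realType) (r : nat) : (0 < r)%N ->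
  \sum_(j < r) \sum_(k < r) (j == k)%:R / (r%:R : R) = 1.
Proof.
move=> r0.
have e : forall j : 'I_r, \sum_(k < r) (j == k)%:R / (r%:R : R) = (r%:R)^-1.
  move=> j; rewrite -mulr_suml (bigD1 j) //= eqxx big1 ?addr0 ?mul1r //.
  by move=> k; rewrite eq_sym => /negbTE ->.
rewrite (eq_bigr _ (fun j _ => e j)) sumr_const card_ord -(mulr_natr (r%:R^-1)) mulVf //.
by rewrite pnatr_eq0 -lt0n.
Qed.

Lemma Nval_split (R : realType) (r : nat) (T : eqType) (c : 'I_r -> T) : (0 < r)%N ->
  Nval R c = 1 + \sum_(j < r) \sum_(k < r) ((j != k) && (c j != c k))%:R / r%:R ^+ 2.
Proof.
move=> r0; rewrite /Nval.
under eq_bigr => j _ do rewrite big_split.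
by rewrite big_split /= sum_diag.
Qed.

Lemma Nval_ge1 (R : realType) (r : nat) (T : eqType) (c : 'I_r -> T) : (0 < r)%N ->
  1 <= Nval R c.
Proof.
move=> r0; rewrite Nval_split // lerDl.
apply: sumr_ge0 => j _; apply: sumr_ge0 => k _.
by apply: divr_ge0; rewrite ?ler0n // exprn_ge0 // ler0n.
Qed.

Lemma Nval_const (R : realType) (r : nat) (T : eqType) (c : 'I_r -> T) : (0 < r)%N ->
  (forall j k, c j = c k) -> Nval R c = 1.
Proof.
move=> r0 hc; rewrite Nval_split // big1 ?addr0 // => j _; rewrite big1 // => k _.
by rewrite (hc j k) eqxx andbF mul0r.
Qed.

Lemma Nval_inj (R : realType) (r : nat) (T : eqType) (c : 'I_r -> T) : (0 < r)%N ->
  (forall j k, j != k -> c j != c k) -> Nval R c = 2 - (r%:R)^-1.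
Proof.
move=> r0 hc; rewrite Nval_split //.
have rn0 : (r%:R : R) != 0 by rewrite pnatr_eq0 -lt0n.
have e : forall j : 'I_r, \sum_(k < r) ((j != k) && (c j != c k))%:R / (r%:R : R) ^+ 2
   = (r%:R - 1) / r%:R ^+ 2.
  move=> j; rewrite -mulr_suml; congr (_ * _).
  have -> : \sum_(k < r) ((j != k) && (c j != c k))%:R = \sum_(k < r) (1 - (j == k)%:R :R).
    apply: eq_bigr => k _; case: (eqVneq j k) => [->|ne]; first by rewrite eqxx subrr.
    by rewrite (hc _ _ ne) subr0.
  rewrite sumrB sumr_const card_ord (bigD1 j) //= eqxx big1 ?addr0 //.
  by move=> k; rewrite eq_sym => /negbTE ->.
rewrite (eq_bigr _ (fun j _ => e j)) sumr_const card_ord -mulr_natl.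
by field.
Qed.

Lemma norm_h (R : realType) (r : nat) (C : finType) (d0 : nat)
   (v : 'I_r -> C -> {ffun 'I_d0 -> R}) (c : 'I_r -> C) :
  @vector_system R r C d0 2 v ->
  \sum_(i < d0) `|\sum_(j < r) v j (c j) i| ^+ 2 = Nval R c.
Proof.
move=> Hvs.
under eq_bigr => i _ do rewrite real_normK ?num_real // expr2 mulr_suml.
under eq_bigr => i _ do under eq_bigr => j _ do rewrite mulr_sumr.
rewrite exchange_big /Nval; apply: eq_bigr => j _.
rewrite exchange_big; apply: eq_bigr => k _.
by rewrite (ip_val Hvs).
Qed.

Unset Implicit Arguments.

Theorem lemma4p1 (R : realType) (r : nat) (H : HLC r) (d0 : nat)
    (v : 'I_r -> lc_C H -> {ffun 'I_d0 -> R}) :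
  (2 <= r)%N -> (0 < #|lc_E H|)%N ->
  @vector_system R r (lc_C H) d0 2 v ->
  ((exists s : assignment H, forall h, satisfies s h) ->
     exists P, is_st_path P /\ scaled_normp_pow 2 (path_cost v P) = 1)
  /\
  (forall eps : R,
     (forall s : assignment H,
        #|[set h | weakly_satisfies s h]|%:R <= eps * #|lc_E H|%:R) ->
     forall P, is_st_path P ->
       2 - ((r%:R)^-1 + 2 * eps) <= scaled_normp_pow 2 (path_cost v P)).
Proof.
move=> r2 m0 Hvs.
have r0 : (0 < r)%N by apply: leq_trans r2.
have mpos : 0 < (#|lc_E H|%:R : R) by rewrite ltr0n.
have mn0 : (#|lc_E H|%:R : R) != 0 by rewrite gt_eqF.
have key : forall (P : {set lc_V H * lc_L H}) (sg : assignment H), (forall u l, ((u,l) \in P) = (l == sg u)) ->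
    scaled_normp_pow 2 (path_cost v P)
    = (#|lc_E H|%:R)^-1 * \sum_(h : lc_E H) Nval R (color sg h).
  move=> P sg HP; rewrite /scaled_normp_pow; congr (_ * _); apply: eq_bigr => h _.
  rewrite -(norm_h _ Hvs); apply: eq_bigr => i _.
  by rewrite (path_cost_sigma _ HP).
split.
  case=> sg Hs.
  pose P := [set (u, sg u) | u : lc_V H].
  have hmem : forall u l, ((u,l) \in P) = (l == sg u).
    move=> u l; apply/imsetP/eqP => [[u' _ [-> ->]] //|->]; by exists u.
  exists P; split.
    move=> u; have -> : [set l | (u, l) \in P] = [set sg u].
      by apply/setP => l; rewrite !inE hmem.
    by rewrite cards1.
  rewrite (key _ _ hmem).
  rewrite (eq_bigr (fun _ => 1)); last first.
    move=> h _; apply: Nval_const => // j k.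
    by move/forallP: (Hs h) => /(_ j) /forallP /(_ k) /eqP.
  by rewrite sumr_const mulVf.
move=> eps Heps P HP.
have [sg Hsg] : exists sg : assignment H, forall u, [set l | (u, l) \in P] = [set sg u].
  apply: (@fin_all_exists _ (fun _ => lc_L H) (fun u l => [set l0 | (u, l0) \in P] = [set l])) => u.
  by apply/cards1P; rewrite HP.
have hmem : forall u l, ((u,l) \in P) = (l == sg u).
  move=> u l; have /setP /(_ l) := Hsg u; by rewrite !inE.
rewrite (key _ _ hmem).
set W := (#|[set h | weakly_satisfies sg h]|%:R : R).
have eW : W = \sum_(h : lc_E H) (weakly_satisfies sg h)%:R.
  rewrite /W -sumr_const big_mkcond /=; apply: eq_bigr => h _.
  by rewrite inE; case: (weakly_satisfies _ _).
have hinv : 0 <= (r%:R : R)^-1 by rewrite invr_ge0 ler0n.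
have bound : forall h, 2 - (r%:R)^-1 <= Nval R (color sg h) + (weakly_satisfies sg h)%:R.
  move=> h; case: (boolP (weakly_satisfies sg h)) => w.
    have := @Nval_ge1 R r _ (color sg h) r0; rewrite /=; lra.
  rewrite (@Nval_inj R r _ _ r0) /= ?addr0 //.
  move=> j k ne; apply: contraNN w => e.
  by apply/existsP; exists j; apply/existsP; exists k; rewrite ne e.
have hsum : #|lc_E H|%:R * (2 - (r%:R)^-1) <= \sum_(h : lc_E H) Nval R (color sg h) + W.
  rewrite eW -big_split /= mulr_natl -sumr_const.
  by apply: ler_sum => h _.
have hW := Heps sg; rewrite -/W in hW.
have W0 : 0 <= W by rewrite ler0n.
have eps0 : 0 <= eps by nra.
set S := \sum_(h : lc_E H) Nval R (color sg h) in hsum *.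
have hS : #|lc_E H|%:R * (2 - (r%:R)^-1 - eps) <= S by nra.
have hm : 0 <= (#|lc_E H|%:R : R)^-1 by rewrite invr_ge0 ltW.
have := ler_wpM2l hm hS; rewrite mulrA mulVf // mul1r.
lra.
Qed.
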